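(* Let $U$ be a nonempty finite set and $R\subseteq U\times U$ a serial and transitive relation, and let $h$ be the height function of the lattice $(Reg(U,R),\subseteq)$. Define $$\mathbf{I}(Reg(U,R);h)=\{X\subseteq U\mid h(Y)\ge |X\cap Y| \text{ for all } Y\in Reg(U,R)\}.$$ Then $\mathbf{I}(Reg(U,R);h)$ satisfies the independent set axioms of a matroid on $U$: (I1) $\emptyset\in\mathbf{I}$; (I2) if $I\in\mathbf{I}$ and $I'\subseteq I$ then $I'\in\mathbf{I}$; (I3) if $I_1,I_2\in\mathbf{I}$ and $|I_1|<|I_2|$, then there exists $e\in I_2\setminus I_1$ with $I_1\cup\{e\}\in\mathbf{I}$.
   Context: $R_s(x)=\{y\in U\mid xRy\}$. $R$ is serial if every $x$ has some $y$ with $xRy$; transitive in the usual sense. $\underline{R}(X)=\{x\in U\mid R_s(x)\subseteq X\}$, $\overline{R}(X)=\{x\in U\mid R_s(x)\cap X\neq\emptyset\}$. $X\subseteq U$ is regular if $X=\underline{R}(\overline{R}(X))$; $Reg(U,R)$ is the set of regular sets ordered by inclusion (its least element is $\emptyset$). For $A\in Reg(U,R)$, the height $h(A)$ is the length (number of elements minus one) of a maximal chain in the interval $[\emptyset,A]=\{B\in Reg(U,R)\mid B\subseteq A\}$ (all such maximal chains have the same length in this finite lattice). *)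

(* Defs.v *)
From mathcomp Require Import all_boot.
Set Implicit Arguments. Unset Strict Implicit. Unset Printing Implicit Defensive.

Section RoughDefs.
Variable U : finType.
Variable R : rel U.

Definition Rs (x : U) : {set U} := [set y | R x y].

Definition lowerR (X : {set U}) : {set U} := [set x | Rs x \subset X].

Definition upperR (X : {set U}) : {set U} := [set x | Rs x :&: X != set0].

Definition regular (X : {set U}) : bool := X == lowerR (upperR X).

Definition chain_in (A : {set U}) (C : {set {set U}}) : bool :=
  [forall B in C, regular B && (B \subset A)] &&
  [forall B in C, forall D in C, (B \subset D) || (D \subset B)].

Definition max_chain_in (A : {set U}) (C : {set {set U}}) : bool :=
  maxset (fun C' : {set {set U}} => chain_in A C') C.

(* height: length (= number of elements minus one) of a maximal chain in
   [set0, A]; all such chains have the same length, we take the max over them *)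
Definition height (A : {set U}) : nat :=
  \max_(C : {set {set U}} | max_chain_in A C) (#|C|).-1.

Definition indep (X : {set U}) : Prop :=
  forall Y : {set U}, regular Y -> #|X :&: Y| <= height Y.

End RoughDefs.

(* Main.v *)
Require Import Defs.
From mathcomp Require Import all_boot.
From mathcomp Require Import zify.
Set Implicit Arguments. Unset Strict Implicit. Unset Printing Implicit Defensive.

Section Aux.
Variable U : finType.
Variable R : rel U.
Hypothesis hser : forall x : U, exists y : U, R x y.
Hypothesis htr : transitive R.

Definition Term : {set U} := [set z | [forall w, R z w ==> R w z]].

Lemma termP z : reflect (forall w, R z w -> R w z) (z \in Term).
Proof.
rewrite inE; apply: (iffP forallP) => H w; first by move=> /(implyP (H w)).
by apply/implyP; apply: H.
Qed.

Lemma term_refl z : z \in Term -> R z z.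
Proof. move=> /termP H; have [w zw] := hser z; exact: htr zw (H _ zw). Qed.

Lemma term_succ z w : z \in Term -> R z w -> w \in Term.
Proof.
move=> /termP H zw; apply/termP => v wv.
exact: htr (H _ (htr zw wv)) zw.
Qed.

Lemma Rs_term z w : z \in Term -> R z w -> Rs R w = Rs R z.
Proof.
move=> /termP H zw; apply/setP => v; rewrite !inE; apply/idP/idP => Hv.
  exact: htr zw Hv.
exact: htr (H _ zw) Hv.
Qed.

Lemma term_exists x : exists2 z, z \in Term & R x z.
Proof.
have [y0 xy0] := hser x.
case: (arg_minnP (fun y => #|Rs R y|) xy0) => y xy ymin.
have [z yz] := hser y.
have sub w : R y w -> Rs R w = Rs R y.
  move=> yw; apply/eqP; rewrite eqEcard; apply/andP; split.
    by apply/subsetP => v; rewrite !inE => wv; exact: htr yw wv.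
  by apply: ymin; exact: htr xy yw.
exists z; last exact: htr xy yz.
apply/termP => v zv.
have : z \in Rs R v by rewrite (sub v (htr yz zv)) inE.
by rewrite inE.
Qed.

Lemma reg_mem_Rs X z : regular R X -> z \in Term -> z \in X -> Rs R z \subset X.
Proof.
move=> /eqP rX zT zX; apply/subsetP => w; rewrite inE => zw.
rewrite rX inE; apply/subsetP => y; rewrite inE => wy.
rewrite inE; apply/set0Pn; exists z; rewrite !inE zX andbT.
have yT : y \in Term by exact: term_succ (term_succ zT zw) wy.
have : R z y := htr zw wy.
by move: zT => /termP H /H.
Qed.

Lemma regP X : regular R X ->
  forall x, x \in X = [forall z, (z \in Term) && R x z ==> (z \in X)].
Proof.
move=> rX x; apply/idP/forallP => [xX z|H].
  apply/implyP => /andP [zT xz].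
  move: (rX) => /eqP rX'; move: xX; rewrite {1}rX' inE => /subsetP /(_ z).
  rewrite !inE => /(_ xz) /set0Pn [w]; rewrite !inE => /andP [zw wX].
  have wT := term_succ zT zw.
  apply: (subsetP (reg_mem_Rs rX wT wX)).
  by rewrite inE; move: zT => /termP /(_ _ zw).
move/eqP: rX => ->; rewrite inE; apply/subsetP => y; rewrite !inE => xy.
have [z zT yz] := term_exists y.
apply/set0Pn; exists z; rewrite !inE yz /=.
by move: (H z) => /implyP; apply; rewrite zT (htr xy yz).
Qed.

Definition G (W : {set U}) : {set U} :=
  [set x | [forall z, (z \in Term) && R x z ==> (z \in W)]].

Lemma G_reg (W : {set U}) : (forall z w, z \in W -> z \in Term -> R z w -> w \in W) ->
  regular R (G W).
Proof.
move=> cl; apply/eqP/setP => x; apply/idP/idP.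
  rewrite inE => /forallP H; rewrite inE; apply/subsetP => y; rewrite !inE => xy.
  have [z zT yz] := term_exists y.
  apply/set0Pn; exists z; rewrite !inE yz /=.
  apply/forallP => v; apply/implyP => /andP [vT zv].
  apply: cl zv => //.
  by move: (H z) => /implyP; apply; rewrite zT (htr xy yz).
rewrite !inE => /subsetP H; apply/forallP => z; apply/implyP => /andP [zT xz].
have := H z; rewrite !inE => /(_ xz) /set0Pn [w]; rewrite !inE => /andP [zw /forallP Hw].
move: (Hw z) => /implyP; apply; rewrite zT.
by move: zT => /termP /(_ _ zw).
Qed.

Lemma reg_G X : regular R X -> G X = X.
Proof. by move=> rX; apply/setP => x; rewrite inE (regP rX). Qed.

Lemma reg_cl X z w : regular R X -> z \in X -> z \in Term -> R z w -> w \in X.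
Proof. by move=> rX zX zT zw; apply: (subsetP (reg_mem_Rs rX zT zX)); rewrite inE. Qed.

Definition S (X : {set U}) : {set {set U}} := (Rs R) @: (X :&: Term).

Lemma S_inj X Y : regular R X -> regular R Y -> S X \subset S Y -> X \subset Y.
Proof.
move=> rX rY sXY; apply/subsetP => x; rewrite (regP rX) (regP rY).
move=> /forallP H; apply/forallP => z; apply/implyP => /andP [zT xz].
have zX : z \in X by move: (H z) => /implyP; apply; rewrite zT.
have : Rs R z \in S Y by apply: (subsetP sXY); apply: imset_f; rewrite inE zX.
case/imsetP => w; rewrite inE => /andP [wY wT] e.
have : z \in Rs R w by rewrite -e inE term_refl.
by rewrite inE; apply: reg_cl.
Qed.

Lemma S_mono (X Y : {set U}) : X \subset Y -> S X \subset S Y.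
Proof. by move=> sXY; apply: imsetS; apply: setSI. Qed.

Lemma regI X Y : regular R X -> regular R Y -> regular R (X :&: Y).
Proof.
move=> rX rY; have -> : X :&: Y = G (X :&: Y).
  apply/setP => x; rewrite !inE (regP rX) (regP rY).
  apply/andP/forallP => [[/forallP H1 /forallP H2] z|H].
    by apply/implyP => P; rewrite inE (implyP (H1 z) P) (implyP (H2 z) P).
  split; apply/forallP => z; apply/implyP => /(implyP (H z)); rewrite inE;
  by case/andP.
apply: G_reg => z w; rewrite inE => /andP [zX zY] zT zw.
by rewrite inE (reg_cl rX zX zT zw) (reg_cl rY zY zT zw).
Qed.

Lemma regU X Y : regular R X -> regular R Y ->
  exists J, [/\ regular R J, X :|: Y \subset J & S J \subset S X :|: S Y].
Proof.
move=> rX rY; exists (G (X :|: Y)); split.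
- apply: G_reg => z w; rewrite inE => /orP [zX|zY] zT zw.
    by rewrite inE (reg_cl rX zX zT zw).
  by rewrite inE (reg_cl rY zY zT zw) orbT.
- apply/subsetP => x; rewrite !inE (regP rX) (regP rY) => /orP [] /forallP H;
  apply/forallP => z; apply/implyP => /(implyP (H z)); rewrite inE => -> //.
  by rewrite orbT.
- apply/subsetP => c /imsetP [z]; rewrite inE => /andP [Hz zT] ->.
  rewrite inE in Hz; move/forallP in Hz.
  have : z \in X :|: Y by move: (Hz z) => /implyP; apply; rewrite zT term_refl.
  rewrite inE => /orP [zX|zY]; apply/setUP; [left|right];
  by apply: imset_f; rewrite inE zT ?zX ?zY.
Qed.


Lemma chainP (A : {set U}) (C : {set {set U}}) : reflect
  ((forall B, B \in C -> regular R B /\ B \subset A) /\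
   (forall B D, B \in C -> D \in C -> (B \subset D) || (D \subset B)))
  (chain_in R A C).
Proof.
apply: (iffP andP) => [[/forallP H1 /forallP H2]|[H1 H2]]; split.
- by move=> B BC; move: (H1 B) => /implyP /(_ BC) /andP.
- by move=> B D BC DC; move: (H2 B) => /implyP /(_ BC) /forallP /(_ D) /implyP /(_ DC).
- by apply/forallP => B; apply/implyP => /H1 [-> ->].
- apply/forallP => B; apply/implyP => BC; apply/forallP => D; apply/implyP => DC.
  exact: H2.
Qed.

Lemma chain_card (A : {set U}) (C : {set {set U}}) : regular R A -> chain_in R A C -> #|C| <= #|S A|.+1.
Proof.
move=> rA /chainP [H1 H2].
pose f (B : {set U}) : 'I_(#|S A|).+1 := inord #|S B|.
have le B : B \in C -> #|S B| <= #|S A|.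
  by move=> /H1 [_ sBA]; apply: subset_leq_card; apply: S_mono.
have inj : {in C &, injective f}.
  move=> B D BC DC /(congr1 val) /=; rewrite !inordK ?ltnS ?le // => e.
  have [rB _] := H1 B BC; have [rD _] := H1 D DC.
  case/orP: (H2 B D BC DC) => s.
    have /eqP eS : S B == S D by rewrite eqEcard S_mono //= e.
    by apply/eqP; rewrite eqEsubset s S_inj // eS.
  have /eqP eS : S D == S B by rewrite eqEcard S_mono //= e.
  by apply/eqP; rewrite eqEsubset s S_inj // eS.
rewrite -(card_in_imset inj); apply: leq_trans (max_card _) _.
by rewrite card_ord.
Qed.

Lemma height_le (A : {set U}) : regular R A -> height R A <= #|S A|.
Proof.
move=> rA; apply/bigmax_leqP => C /maxsetp HC.
by have := chain_card rA HC; case: #|C|.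
Qed.

Lemma chain_exists n : forall A : {set U}, regular R A -> #|S A| = n ->
  exists2 C, chain_in R A C & n < #|C|.
Proof.
elim: n => [|n IH] A rA hn.
  exists [set A]; last by rewrite cards1.
  apply/chainP; split => [B|B D]; rewrite ?inE => /eqP -> //.
  by move=> /eqP ->; rewrite subxx.
have : 0 < #|S A| by rewrite hn.
case/card_gt0P => c /imsetP [z]; rewrite inE => /andP [zA zT] ec.
pose A' := G (A :\: Rs R z).
have zz := term_refl zT.
have rA' : regular R A'.
  apply: G_reg => w v; rewrite inE => /andP [wz wA] wT wv.
  rewrite inE (reg_cl rA wA wT wv) andbT; apply/negP; rewrite inE => zv.
  by move: wz; rewrite inE (htr zv (elimT (termP w) wT v wv)).
have A'A : A' \subset A.
  apply/subsetP => x; rewrite inE (regP rA) => /forallP H; apply/forallP => u.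
  by apply/implyP => /(implyP (H u)); rewrite inE => /andP [].
have zA' : z \notin A'.
  apply/negP; rewrite inE => /forallP /(_ z) /implyP.
  by rewrite zT zz => /(_ isT); rewrite inE inE zz.
have eS : S A' = S A :\ c.
  apply/setP => d; apply/idP/idP.
    case/imsetP => u; rewrite inE => /andP [uA' uT] ->.
    have : u \in A :\: Rs R z.
      by move: uA'; rewrite inE => /forallP /(_ u) /implyP; apply; rewrite uT term_refl.
    rewrite inE => /andP [uz uA]; rewrite !inE; apply/andP; split.
      apply/negP => /eqP e; rewrite ec in e; move: uz; rewrite -e inE term_refl //.
    by apply: imset_f; rewrite inE uA uT.
  rewrite !inE => /andP [dc /imsetP [u]]; rewrite inE => /andP [uA uT] ed.
  rewrite ed; apply: imset_f; rewrite inE uT andbT inE.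
  apply/forallP => v; apply/implyP => /andP [vT uv].
  rewrite inE (reg_cl rA uA uT uv) andbT inE; apply/negP => zv.
  move: dc; rewrite ed ec -(Rs_term uT uv) (Rs_term zT zv) eqxx //.
have cS : c \in S A by rewrite ec; apply: imset_f; rewrite inE zA zT.
have hn' : #|S A'| = n by move: hn; rewrite eS (cardsD1 c) cS; case.
have [C' hC' lt] := IH A' rA' hn'.
have AC' : A \notin C'.
  apply/negP => AC; case/chainP: hC' => H1 _; have [_ /subsetP s] := H1 A AC.
  by move: (s z zA); rewrite (negbTE zA').
exists (A |: C'); last by rewrite cardsU1 AC'.
move: hC' => /chainP [H1 H2]; apply/chainP; split.
  move=> B; rewrite !inE => /orP [/eqP ->|/H1 [rB sB]]; first by rewrite subxx.
  by split=> //; apply: subset_trans A'A.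
move=> B D; rewrite !inE => /orP [/eqP ->|BC] /orP [/eqP ->|DC].
- by rewrite subxx.
- by have [_ sD] := H1 D DC; rewrite (subset_trans sD A'A) orbT.
- by have [_ sB] := H1 B BC; rewrite (subset_trans sB A'A).
- exact: H2.
Qed.

Lemma height_eq (A : {set U}) : regular R A -> height R A = #|S A|.
Proof.
move=> rA; apply/eqP; rewrite eqn_leq height_le //=.
have [C hC lt] := chain_exists rA (erefl _).
have [C0 mC0 sC] := maxset_exists hC.
apply: leq_trans (leq_bigmax_cond _ mC0).
have := subset_leq_card sC; move: lt; case: #|C0| => //= m; lia.
Qed.

End Aux.

Lemma regular0 (U : finType) (R : rel U) :
  (forall x : U, exists y : U, R x y) -> regular R set0.
Proof.
move=> hser; apply/eqP/setP => x; rewrite !inE; symmetry; apply/negP.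
have [y xy] := hser x.
by move=> /subsetP /(_ y); rewrite !inE xy setI0 eqxx => /(_ isT).
Qed.

Lemma setI3 (U : finType) (A B C : {set U}) :
  (A :&: B) :&: (A :&: C) = A :&: (B :&: C).
Proof.
by apply/setP => x; rewrite !inE; case: (x \in A); case: (x \in B); case: (x \in C).
Qed.

Unset Implicit Arguments.
Set Strict Implicit.
Set Printing Implicit Defensive.

Theorem proposition2 (U : finType) (R : rel U)
  (hU : 0 < #|U|)
  (hser : forall x : U, exists y : U, R x y)
  (htr : transitive R) :
  [/\ indep R set0,
      (forall I I' : {set U}, indep R I -> I' \subset I -> indep R I') &
      (forall I1 I2 : {set U}, indep R I1 -> indep R I2 -> #|I1| < #|I2| ->
         exists2 e, e \in I2 :\: I1 & indep R (e |: I1))].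
Proof.
split.
- by move=> Y _; rewrite set0I cards0.
- move=> I I' hI sI Y rY; apply: leq_trans (hI Y rY).
  by apply: subset_leq_card; apply: setSI.
move=> I1 I2 h1 h2 lt.
case: (boolP [exists e in I2 :\: I1,
   [forall Y, regular R Y ==> (#|(e |: I1) :&: Y| <= height R Y)]]).
  case/exists_inP => e eI /forallP H; exists e => // Y rY.
  exact: (implyP (H Y) rY).
move=> /exists_inPn Hn.
have tight e : e \in I2 :\: I1 ->
    exists Y, [/\ regular R Y, e \in Y & height R Y <= #|I1 :&: Y|].
  move=> eI; move: (Hn e eI); rewrite negb_forall => /existsP [Y].
  rewrite negb_imply -ltnNge => /andP [rY ltY].
  exists Y; have le1 := h1 Y rY.
  have c1 : #|[set e] :&: Y| <= (e \in Y).
    case eY: (e \in Y).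
      by rewrite (leq_trans (subset_leq_card (subsetIl _ _))) ?cards1.
    suff -> : [set e] :&: Y = set0 by rewrite cards0.
    by apply/setP => x; rewrite !inE; case: eqP => // ->; rewrite eY.
  have c2 : #|(e |: I1) :&: Y| <= #|[set e] :&: Y| + #|I1 :&: Y|.
    by rewrite setIUl; apply: leq_card_setU.
  case eY: (e \in Y); rewrite eY in c1; split => //; lia.
have gather : forall s : seq U, all (mem (I2 :\: I1)) s ->
    exists Y, [/\ regular R Y, {subset s <= Y} & height R Y <= #|I1 :&: Y|].
  elim => [|e s IH].
    move=> _; exists set0; split => //; first exact: regular0.
    apply: leq_trans (height_le hser htr (regular0 hser)) _.
    by rewrite /S set0I imset0 cards0.
  move=> /andP [eI /IH [Y1 [r1 s1 t1]]].
  have [Y2 [r2 e2 t2]] := tight e eI.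
  have [J [rJ sJ SJ]] := regU hser htr r1 r2.
  have r12 := regI hser htr r1 r2.
  exists J; split => //.
    move=> x; rewrite inE => /orP [/eqP ->|xs]; apply: (subsetP sJ); rewrite inE.
      by rewrite e2 orbT.
    by rewrite s1.
  rewrite !(height_eq hser htr) // in t1 t2 *.
  have := h1 _ r12; rewrite (height_eq hser htr) // => t12.
  have a1 := leq_card_setU (S R Y1) (S R Y2) .
  have a2 := cardsUI (S R Y1) (S R Y2).
  have a3 : #|S R (Y1 :&: Y2)| <= #|S R Y1 :&: S R Y2|.
    by apply: subset_leq_card; rewrite subsetI !(S_mono R) ?subsetIl ?subsetIr.
  have a4 := subset_leq_card SJ.
  have a5 := cardsUI (I1 :&: Y1) (I1 :&: Y2).
  rewrite setI3 in a5.
  have a6 : #|(I1 :&: Y1) :|: (I1 :&: Y2)| <= #|I1 :&: J|.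
    by apply: subset_leq_card; rewrite -setIUr; apply: setIS.
  lia.
have [Y [rY sY tY]] : exists Y, [/\ regular R Y, {subset enum (I2 :\: I1) <= Y} & height R Y <= #|I1 :&: Y|].
  by apply: gather; apply/allP => x; rewrite mem_enum.
have hY := h2 Y rY.
have b1 := cardsID I1 (I2 :&: Y).
have b2 := cardsID I2 (I1 :&: Y).
have b3 : #|I2 :\: I1| <= #|(I2 :&: Y) :\: I1|.
  apply: subset_leq_card; apply/subsetP => x xI.
  have := sY x; rewrite mem_enum => /(_ xI) xY.
  by move: xI; rewrite !inE xY => /andP [-> ->].
have b4 : #|(I1 :&: Y) :\: I2| <= #|I1 :\: I2|.
  by apply: subset_leq_card; apply/subsetP => x; rewrite !inE => /andP [-> /andP [-> _]].
have b5 : I2 :&: Y :&: I1 = I1 :&: Y :&: I2.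
  by apply/setP => x; rewrite !inE; case: (x \in I1); case: (x \in I2); case: (x \in Y).
have b6 := cardsID I2 I1.
have b7 := cardsID I1 I2.
rewrite b5 in b1; rewrite [I2 :&: I1]setIC in b7.
lia.
Qed.
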